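(* Let $n\in\mathbb{N}$, $H\in\mathbb{R}^{n\times n}$, $W\in\mathbb{R}^{n\times n}$ with $W\succ 0$, let $C=\mathrm{diag}(C_{11},\dots,C_{nn})$ be diagonal with all $C_{ii}\neq 0$, and let $V=\mathrm{diag}(\sigma_1^2,\dots,\sigma_n^2)$ with all $\sigma_i>0$. Assume $(H,C)$ is observable and $(H,D)$ is controllable, where $W=DD^T$. Let $\Sigma$ be the unique positive semidefinite solution of $$\Sigma = H\Sigma H^T - H\Sigma C^T(C\Sigma C^T+V)^{-1}C\Sigma H^T + W ,$$ and let $\overline{\Sigma}:=(C^TV^{-1}C+\Sigma^{-1})^{-1}$. Then $$\frac{n\,\sigma_u^2}{C_u^2+\sigma_u^2\,\lambda_n(W)^{-1}}\;\le\;\mathrm{tr}\,\overline{\Sigma}\;\le\; n\,\frac{\sigma_l^2}{C_l^2}.$$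
   Context: This models a linear system $x(k+1)=Hx(k)+w(k)$, $w(k)\sim\mathcal N(0,W)$, whose outputs $Cx(k)$ are privatized by adding Gaussian noise $v(k)\sim\mathcal N(0,V)$ before being processed by a steady-state Kalman filter; $\Sigma$ is the steady-state a priori error covariance and $\overline\Sigma$ the steady-state a posteriori error covariance (its trace is the steady-state mean squared estimation error). For a symmetric matrix $K$, $\lambda_n(K)\le\dots\le\lambda_1(K)$ denote its eigenvalues. Indices: $l:=\arg\min_{1\le i\le n} C_{ii}^2/\sigma_i^2$ and $u:=\arg\max_{1\le i\le n} C_{ii}^2/\sigma_i^2$; $C_l:=C_{ll}$, $C_u:=C_{uu}$, and $\sigma_l,\sigma_u$ are the corresponding $\sigma_i$. *)

(* Defs.v *)
From HB Require Import structures.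
From mathcomp Require Import all_boot all_order all_algebra.
Set Implicit Arguments. Unset Strict Implicit. Unset Printing Implicit Defensive.
Import Order.TTheory GRing.Theory Num.Theory.
Local Open Scope ring_scope.

Definition psd (R : realFieldType) (n : nat) (A : 'M[R]_n) : Prop :=
  A^T = A /\ forall v : 'cV[R]_n, 0 <= (v^T *m A *m v) 0 0.

Definition pd (R : realFieldType) (n : nat) (A : 'M[R]_n) : Prop :=
  A^T = A /\ forall v : 'cV[R]_n, v != 0 -> 0 < (v^T *m A *m v) 0 0.

(* (H, C) observable: the observability matrix [C; CH; ...; CH^(n-1)] has rank n
   (rank of a stacked matrix = rank of the sum of the row spaces of its blocks) *)
Definition observable (R : fieldType) (n p : nat) (H : 'M[R]_n) (C : 'M[R]_(p, n)) : Prop :=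
  \rank (\sum_(k < n) <<C *m H ^+ k>>)%MS = n.

(* (H, D) controllable: the controllability matrix [D, HD, ..., H^(n-1) D] has rank n
   (stated via its transpose) *)
Definition controllable (R : fieldType) (n m : nat) (H : 'M[R]_n) (D : 'M[R]_(n, m)) : Prop :=
  \rank (\sum_(k < n) <<(H ^+ k *m D)^T>>)%MS = n.

Definition is_min_eigenvalue (R : realFieldType) (n : nat) (W : 'M[R]_n) (lam : R) : Prop :=
  eigenvalue W lam /\ forall a, eigenvalue W a -> lam <= a.

(* Main.v *)
Require Import Defs.
From HB Require Import structures.
From mathcomp Require Import all_boot all_order all_algebra.
From mathcomp Require Import complex.
From mathcomp Require Import ring lra.
Set Implicit Arguments. Unset Strict Implicit. Unset Printing Implicit Defensive.
Import Order.TTheory GRing.Theory Num.Theory.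
Local Open Scope ring_scope.

Section S.
Variable R : rcfType.
Local Notation f := (real_complex R).

Lemma cr (x : R) : Num.conj (f x) = f x.
Proof. by rewrite /=; apply: conjc_real. Qed.

Lemma min_eig_bound n (W : 'M[R]_n) lam :
  W^T = W -> (forall a, eigenvalue W a -> lam <= a) ->
  forall v : 'cV[R]_n, lam * (v^T *m v) 0 0 <= (v^T *m W *m v) 0 0.
Proof.
move=> Ws Hmin v.
pose W' := map_mx f W.
have Wc : map_mx Num.conj W' = W'.
  by apply/matrixP => i j; rewrite !mxE cr.
have herm : W' \is hermsymmx.
  apply/is_hermitianmxP; rewrite expr0 scale1r.
  apply/matrixP => i j; rewrite !mxE cr.
  by have := congr1 (fun M : 'M[R]_n => M i j) Ws; rewrite mxE => ->.
have /orthomx_spectralP Weq := hermitian_normalmx herm.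
set P := spectralmx W' in Weq; set d := spectral_diag W' in Weq.
have Pu : P \is unitarymx := spectral_unitarymx W'.
have PPt := unitarymxP Pu.
have Punit : P \in unitmx := spectral_unit W'.
have dreal := hermitian_spectral_diag_real herm.
have dge : forall j, f lam <= d 0 j.
  move=> j.
  have /complex_realP [r dr] : d 0 j \is Num.real by apply: (mxOverP dreal).
  rewrite dr lecR; apply: Hmin.
  rewrite eigenvalue_root_char -(fmorph_root (real_complex R)) map_char_poly.
  rewrite -/W'; have -> : root (char_poly W') (f r) = root (char_poly W') (d 0 j) by rewrite dr.
  rewrite -eigenvalue_root_char; apply/eigenvalueP.
  exists (row j P).
    have : P *m W' = diag_mx d *m P by rewrite {1}Weq !mulmxA mulmxV // mul1mx.
    move/(congr1 (row j)); rewrite !row_mul => ->.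
    by rewrite row_diag_mx -scalemxAl -rowE.
  apply/eqP => r0; have := congr1 (row j) PPt.
  rewrite row_mul r0 mul0mx => /rowP/(_ j); rewrite !mxE eqxx /=.
  by move/eqP; rewrite eq_sym oner_eq0.
pose w := map_mx f v.
have wc : map_mx Num.conj w = w by apply/matrixP => i j; rewrite !mxE cr.
pose y := w^T *m (P^t*)%sesqui.
have ystar : (y^t*)%sesqui = P *m w.
  rewrite /y trmx_mul map_mxM trmxCK; congr (_ *m _).
  by rewrite trmxK wc.
have E1 : f ((v^T *m W *m v) 0 0) = (y *m diag_mx d *m (y^t*)%sesqui) 0 0.
  transitivity ((w^T *m W' *m w) 0 0).
    by rewrite /w /W' map_trmx -!map_mxM [RHS]mxE.
  by rewrite ystar /y {1}Weq invmx_unitary // !mulmxA.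
have E2 : f ((v^T *m v) 0 0) = (y *m (y^t*)%sesqui) 0 0.
  transitivity ((w^T *m w) 0 0).
    by rewrite /w map_trmx -!map_mxM [RHS]mxE.
  by rewrite ystar /y !mulmxA -(mulmxA _ _ P) (mulmx1C PPt) mulmx1.
have Q1 : (y *m diag_mx d *m (y^t*)%sesqui) 0 0 =
   \sum_k d 0 k * (y 0 k * Num.conj (y 0 k)).
  rewrite mxE; apply: eq_bigr => k _.
  by rewrite mul_mx_diag !mxE mulrCA mulrA.
have Q2 : (y *m (y^t*)%sesqui) 0 0 = \sum_k (y 0 k * Num.conj (y 0 k)).
  by rewrite mxE; apply: eq_bigr => k _; rewrite !mxE.
rewrite -lecR rmorphM /= E1 E2 Q1 Q2 mulr_sumr.
apply: ler_sum => k _; apply: ler_wpM2r; last exact: dge.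
exact: mulcJ_ge0.
Qed.

Definition q n (A : 'M[R]_n) (x : 'cV[R]_n) := (x^T *m A *m x) 0 0.

Lemma qD n (A B : 'M[R]_n) x : q (A + B) x = q A x + q B x.
Proof. by rewrite /q mulmxDr mulmxDl mxE. Qed.

Lemma qB n (A B : 'M[R]_n) x : q (A - B) x = q A x - q B x.
Proof. by rewrite /q mulmxBr mulmxBl mxE [in X in _ + X]mxE. Qed.

Lemma q_delta n (A : 'M[R]_n) i : q A (delta_mx i 0) = A i i.
Proof. by rewrite /q trmx_delta -rowE -colE !mxE. Qed.

Lemma q_diag n (d : 'rV[R]_n) x : q (diag_mx d) x = \sum_j d 0 j * x j 0 ^+ 2.
Proof.
rewrite /q mul_mx_diag mxE; apply: eq_bigr => j _; rewrite !mxE.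
by rewrite expr2; ring.
Qed.

Lemma q_1 n (x : 'cV[R]_n) : q 1%:M x = \sum_j x j 0 ^+ 2.
Proof.
rewrite /q mulmx1 mxE; apply: eq_bigr => j _; rewrite !mxE.
by rewrite expr2; ring.
Qed.

Lemma q_expand n (A : 'M[R]_n) u z t :
  q A (u - t *: z) = q A u - t * ((u^T *m A *m z) 0 0 + (z^T *m A *m u) 0 0)
     + t ^+ 2 * q A z.
Proof.
rewrite /q.
have -> : (u - t *: z)^T = u^T - t *: z^T by rewrite linearB linearZ.
rewrite mulmxBl mulmxBr !mulmxBl.
rewrite -!scalemxAl -!scalemxAr !mxE.
rewrite expr2; ring.
Qed.

Lemma sum_ge_term n (F : 'I_n -> R) i : (forall j, 0 <= F j) -> F i <= \sum_j F j.
Proof.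
move=> F0; rewrite (bigD1 i) //= lerDl; exact: sumr_ge0.
Qed.


Lemma inv_e n (A : 'M[R]_n) i : A \in unitmx ->
  let x := invmx A *m (delta_mx i 0 : 'cV[R]_n) in
  [/\ q A x = invmx A i i, x i 0 = invmx A i i &
      ((delta_mx i 0 : 'cV[R]_n)^T *m A *m x) 0 0 = 1].
Proof.
move=> Au x.
have Ax : A *m x = delta_mx i 0 by rewrite /x mulmxA mulmxV // mul1mx.
have xi : x i 0 = invmx A i i by rewrite /x -colE mxE.
split => //.
  by rewrite /q -mulmxA Ax -colE mxE mxE xi.
by rewrite -mulmxA Ax trmx_delta mul_delta_mx mxE !eqxx.
Qed.

Lemma inv_diag_upper n (A : 'M[R]_n) i dd : A \in unitmx -> 0 < dd ->
  (forall x : 'cV[R]_n, dd * x i 0 ^+ 2 <= q A x) -> invmx A i i <= dd^-1.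
Proof.
move=> Au dd0 H; have [E1 E2 _] := inv_e i Au.
have := H (invmx A *m delta_mx i 0); rewrite E1 E2.
set a := invmx A i i => h.
rewrite -(ler_pM2l dd0) mulfV ?gt_eqF //.
case: (lerP (dd * a) 1) => // h2.
have a0 : 0 < a.
  by rewrite -(pmulr_rgt0 _ dd0); apply: lt_trans h2.
suff : a < dd * a ^+ 2 by rewrite ltNge h.
by rewrite expr2 mulrA -{1}(mul1r a) ltr_pM2r.
Qed.

Lemma inv_diag_lower n (A : 'M[R]_n) i : A^T = A -> A \in unitmx ->
  (forall x : 'cV[R]_n, 0 <= q A x) -> 0 < A i i -> (A i i)^-1 <= invmx A i i.
Proof.
move=> As Au Apsd Aii; have [E1 E2 E3] := inv_e i Au.
set x := invmx A *m delta_mx i 0 in E1 E2 E3.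
have E4 : (x^T *m A *m (delta_mx i 0 : 'cV[R]_n)) 0 0 = 1.
  have h : (x^T *m A *m (delta_mx i 0 : 'cV[R]_n))^T =
     (delta_mx i 0 : 'cV[R]_n)^T *m A *m x.
    by rewrite !trmx_mul !trmxK As mulmxA.
  by rewrite -E3 -h [RHS]mxE.
have := Apsd (delta_mx i 0 - A i i *: x).
rewrite q_expand q_delta -/(q A x) E1 E3 E4 => h.
rewrite -(ler_pM2l Aii) mulfV ?gt_eqF //.
have : 0 <= A i i * (A i i * invmx A i i - 1) by lra.
by rewrite pmulr_rge0 // subr_ge0.
Qed.

Lemma pd_unit n (A : 'M[R]_n) : (forall x : 'cV[R]_n, x != 0 -> 0 < q A x) -> A \in unitmx.
Proof.
move=> Apd; rewrite -row_free_unit -kermx_eq0; apply/negPn/negP => K.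
have [i Ki] : exists i, row i (kermx A) != 0.
  apply/existsP; apply: contraR K => /existsPn H; apply/eqP/row_matrixP => i.
  by have := H i; rewrite negbK linear0 => /eqP ->.
have := Apd (row i (kermx A))^T; rewrite trmx_eq0 => /(_ Ki).
by rewrite /q trmxK -row_mul mulmx_ker row0 mul0mx mxE ltxx.
Qed.


Lemma q_conj n (A B : 'M[R]_n) (x : 'cV[R]_n) : q (B *m A *m B^T) x = q A (B^T *m x).
Proof. by rewrite /q trmx_mul trmxK !mulmxA. Qed.

Lemma q_diag_ge0 n (d : 'rV[R]_n) (x : 'cV[R]_n) : (forall j, 0 <= d 0 j) -> 0 <= q (diag_mx d) x.
Proof.
move=> d0; rewrite q_diag; apply: sumr_ge0 => j _.
by apply: mulr_ge0 => //; apply: sqr_ge0.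
Qed.

Lemma q_diag_term n (d : 'rV[R]_n) (x : 'cV[R]_n) i : (forall j, 0 <= d 0 j) ->
  d 0 i * x i 0 ^+ 2 <= q (diag_mx d) x.
Proof.
move=> d0; rewrite q_diag; apply: (@sum_ge_term _ (fun j => d 0 j * x j 0 ^+ 2) i).
by move=> j; apply: mulr_ge0 => //; apply: sqr_ge0.
Qed.

Lemma q_diag_pos n (d : 'rV[R]_n) (x : 'cV[R]_n) : (forall j, 0 < d 0 j) -> x != 0 ->
  0 < q (diag_mx d) x.
Proof.
move=> d0 xn0.
have [j xj] : exists j, x j 0 != 0.
  apply/existsP; apply: contraR xn0 => /existsPn H; apply/eqP/matrixP => i k.
  by rewrite ord1 mxE; have := H i; rewrite negbK => /eqP.
apply: (lt_le_trans _ (q_diag_term x j _)); last by move=> l; apply/ltW.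
by apply: mulr_gt0 => //; rewrite exprn_even_gt0.
Qed.

Lemma schur n (Sg C V : 'M[R]_n) : (forall x, 0 <= q Sg x) ->
  (forall x, 0 <= q V x) -> (C *m Sg *m C^T + V) \in unitmx ->
  forall x, 0 <= q (Sg - Sg *m C^T *m invmx (C *m Sg *m C^T + V) *m C *m Sg) x.
Proof.
move=> Sp Vp Su x.
set S := C *m Sg *m C^T + V.
pose y := invmx S *m (C *m Sg *m x).
pose a := q Sg x.
pose b := (x^T *m Sg *m C^T *m y) 0 0.
pose b' := (y^T *m C *m Sg *m x) 0 0.
pose c' := (y^T *m C *m Sg *m C^T *m y) 0 0.
pose dV := (y^T *m V *m y) 0 0.
have e1 : q (Sg - Sg *m C^T *m invmx S *m C *m Sg) x = a - b.
  by rewrite qB /b /y /q !mulmxA.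
have e2 : q Sg (x - C^T *m y) = a - (b + b') + c'.
  have := q_expand Sg x (C^T *m y) 1; rewrite scale1r expr1n !mul1r => ->.
  by rewrite /a /b /b' /c' /q !trmx_mul !trmxK !mulmxA.
have e3 : c' + dV = b'.
  have : (y^T *m S *m y) 0 0 = b'.
    by rewrite /b' /y -mulmxA mulKVmx // !mulmxA.
  by rewrite /S mulmxDr mulmxDl mxE /c' /dV !mulmxA.
rewrite e1.
have := Sp (x - C^T *m y); have := Vp y; rewrite e2 /q -/dV; lra.
Qed.

End S.

Theorem theorem2 (R : rcfType) (n m : nat)
  (H W : 'M[R]_n.+1) (D : 'M[R]_(n.+1, m))
  (c sigma : 'rV[R]_n.+1) (Sigma : 'M[R]_n.+1) (l u : 'I_n.+1) (lam : R) :
  pd W ->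
  W = D *m D^T ->
  (forall i, c 0 i != 0) ->
  (forall i, 0 < sigma 0 i) ->
  let C := diag_mx c in
  let V := diag_mx (\row_i (sigma 0 i ^+ 2)) in
  observable H C ->
  controllable H D ->
  psd Sigma ->
  Sigma = H *m Sigma *m H^T
          - H *m Sigma *m C^T *m invmx (C *m Sigma *m C^T + V) *m C *m Sigma *m H^T
          + W ->
  (forall i, c 0 l ^+ 2 / sigma 0 l ^+ 2 <= c 0 i ^+ 2 / sigma 0 i ^+ 2) ->
  (forall i, c 0 i ^+ 2 / sigma 0 i ^+ 2 <= c 0 u ^+ 2 / sigma 0 u ^+ 2) ->
  is_min_eigenvalue W lam ->
  let Sigmabar := invmx (C^T *m invmx V *m C + invmx Sigma) in
  (n.+1)%:R * sigma 0 u ^+ 2 / (c 0 u ^+ 2 + sigma 0 u ^+ 2 * lam^-1) <= \tr Sigmabar /\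
  \tr Sigmabar <= (n.+1)%:R * (sigma 0 l ^+ 2 / c 0 l ^+ 2).
Proof.
move=> [Ws Wpos] _ c0 s0 C V _ _ [Ss Sq] Ric Hl Hu [Heig Hmin] Sigmabar.
have Wq : forall x, x != 0 -> 0 < q W x by move=> x /Wpos.
have Sq' : forall x, 0 <= q Sigma x by move=> x; apply: Sq.
have lam0 : 0 < lam.
  move/eigenvalueP: Heig => [z zW zn0].
  have := Wq z^T; rewrite trmx_eq0 => /(_ zn0).
  rewrite /q trmxK zW -scalemxAl mxE.
  have : 0 <= (z *m z^T) 0 0.
    rewrite mxE; apply: sumr_ge0 => j _; rewrite mxE -expr2; exact: sqr_ge0.
  move=> h1 h2; rewrite ltNge; apply/negP => h3.
  by move: h2; rewrite ltNge (mulr_le0_ge0 h3 h1).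
have Wlam : forall x, lam * q 1%:M x <= q W x.
  move=> x; rewrite {1}/q mulmx1; exact: min_eig_bound.
pose sv := \row_i (sigma 0 i ^+ 2) : 'rV[R]_n.+1.
have sv0 : forall j, 0 < sv 0 j by move=> j; rewrite mxE exprn_gt0.
have Vq : forall x, 0 <= q V x by move=> x; apply: q_diag_ge0 => j; apply/ltW.
have Su : C *m Sigma *m C^T + V \in unitmx.
  apply: pd_unit => x xn0; rewrite qD q_conj.
  by apply: (le_lt_trans (Sq' (C^T *m x))); rewrite ltrDl /V q_diag_pos.
have SW : forall x, q W x <= q Sigma x.
  move=> x; rewrite {1}Ric qD lerDr.
  set M := Sigma - Sigma *m C^T *m invmx (C *m Sigma *m C^T + V) *m C *m Sigma.
  have -> : H *m Sigma *m H^T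
    - H *m Sigma *m C^T *m invmx (C *m Sigma *m C^T + V) *m C *m Sigma *m H^T
    = H *m M *m H^T by rewrite /M mulmxBr mulmxBl !mulmxA.
  rewrite q_conj; exact: schur.
have Su' : Sigma \in unitmx.
  apply: pd_unit => x xn0; exact: (lt_le_trans (Wq x xn0) (SW x)).
pose P := invmx Sigma.
have Ps : P^T = P by rewrite /P trmx_inv Ss.
have Pq : forall y, 0 <= q P y.
  move=> y; have := Sq' (P *m y).
  by rewrite /q trmx_mul Ps !mulmxA mulmxKV.
have Pii : forall i, invmx Sigma i i <= lam^-1.
  move=> i; apply: inv_diag_upper => // x.
  apply: (le_trans _ (SW x)); apply: (le_trans _ (Wlam x)).
  rewrite ler_pM2l // q_1; apply: (@sum_ge_term _ _ (fun j => x j 0 ^+ 2)).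
  by move=> j; apply: sqr_ge0.
have csq : forall j, 0 < c 0 j ^+ 2 by move=> j; rewrite exprn_even_gt0 // c0 orbT.
have ssq : forall j, 0 < sigma 0 j ^+ 2 by move=> j; rewrite exprn_gt0.
pose dd := \row_i (c 0 i ^+ 2 / sigma 0 i ^+ 2) : 'rV[R]_n.+1.
have dd0 : forall j, 0 < dd 0 j.
  by move=> j; rewrite mxE; apply: divr_gt0.
have Vinv : invmx V = diag_mx (\row_i (sigma 0 i ^+ 2)^-1).
  have h : V *m diag_mx (\row_i (sigma 0 i ^+ 2)^-1) = 1%:M.
    rewrite /V mulmx_diag; apply/matrixP => i j; rewrite !mxE.
    by case: (i == j); rewrite ?mulr1n ?mulr0n // mulfV ?gt_eqF ?ssq.
  have Vu : V \in unitmx by case: (mulmx1_unit h).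
  by rewrite -[RHS](mulKmx Vu) h mulmx1.
have Md : C^T *m invmx V *m C = diag_mx dd.
  rewrite Vinv /C tr_diag_mx !mulmx_diag; congr diag_mx; apply/rowP => i.
  by rewrite !mxE mulrC mulrA -expr2 mulrC.
rewrite /Sigmabar Md -/P.
set A := diag_mx dd + P.
have As : A^T = A by rewrite /A linearD /= tr_diag_mx Ps.
have Aq : forall x, 0 <= q A x.
  by move=> x; rewrite /A qD; apply: addr_ge0 => //; apply: q_diag_ge0 => j; apply/ltW.
have Au : A \in unitmx.
  apply: pd_unit => x xn0; rewrite /A qD.
  by apply: (lt_le_trans (q_diag_pos dd0 xn0)); rewrite lerDl.
have Aii : forall i, A i i = dd 0 i + P i i.
  by move=> i; rewrite /A !mxE eqxx mulr1n.
have P0 : forall i, 0 <= P i i by move=> i; rewrite -q_delta.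
split.
- have lb : forall i, (dd 0 u + lam^-1)^-1 <= invmx A i i.
    move=> i; apply: (le_trans _ (inv_diag_lower As Au Aq _)); last first.
      by rewrite Aii; apply: (lt_le_trans (dd0 i)); rewrite lerDl.
    rewrite lef_pV2 ?posrE; last 2 first.
    + by apply: addr_gt0 => //; rewrite invr_gt0.
    + by rewrite Aii; apply: (lt_le_trans (dd0 i)); rewrite lerDl.
    rewrite Aii; apply: lerD; last exact: Pii.
    by have := Hu i; rewrite !mxE.
  apply: (le_trans _ (ler_sum _ (fun i _ => lb i))).
  rewrite sumr_const card_ord -[X in _ <= X]mulr_natl.
  have su0 : sigma 0 u != 0 by rewrite gt_eqF.
  have l0 : lam != 0 by rewrite gt_eqF.
  have den : c 0 u ^+ 2 + sigma 0 u ^+ 2 * lam^-1 != 0.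
    rewrite gt_eqF //; apply: addr_gt0 => //.
    by apply: mulr_gt0; rewrite ?invr_gt0.
  have den2 : c 0 u ^+ 2 / sigma 0 u ^+ 2 + lam^-1 != 0.
    rewrite gt_eqF //; apply: addr_gt0; last by rewrite invr_gt0.
    by apply: divr_gt0.
  rewrite mxE -mulrA; apply: ler_wpM2l => //; rewrite le_eqVlt; apply/orP; left.
  apply/eqP; field.
  rewrite l0 su0 /= gt_eqF //; apply: addr_gt0 => //; exact: mulr_gt0.
- have ub : forall i, invmx A i i <= sigma 0 l ^+ 2 / c 0 l ^+ 2.
    move=> i; apply: (le_trans (@inv_diag_upper R n.+1 A i (dd 0 i) Au (dd0 i) _)).
      move=> x; rewrite /A qD; apply: (le_trans (q_diag_term x i _)).
        by move=> j; apply/ltW.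
      by rewrite lerDl.
    rewrite mxE -[sigma 0 l ^+ 2 / _]invf_div lef_pV2 ?posrE ?Hl //.
      by apply: divr_gt0.
    by apply: divr_gt0.
  apply: (le_trans (ler_sum _ (fun i _ => ub i))).
  by rewrite sumr_const card_ord -[X in X <= _]mulr_natl.
Qed.
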